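(* Let $q$ be odd with $q\equiv1\pmod 4$, and let $\delta\in\mathbb{F}_{q^8}^*$ with $\delta\neq\pm1$ and $\delta^2=-1$. Then $S(x)=x^q+\delta x^{q^5}$ is not a scattered polynomial of index $t$ over $\mathbb{F}_{q^8}$ for either $t=1$ or $t=5$.
   Context: An $\mathbb{F}_q$-linearized polynomial $S\in\mathbb{F}_{q^n}[x]$ is a scattered polynomial of index $t$ over $\mathbb{F}_{q^n}$ if for all $y,z\in\mathbb{F}_{q^n}^*$, $\frac{S(y)}{y^{q^t}}=\frac{S(z)}{z^{q^t}}$ implies $y/z\in\mathbb{F}_q$. *)

(* Defs.v *)
From HB Require Import structures.
From mathcomp Require Import all_boot all_order all_algebra all_field.
Set Implicit Arguments. Unset Strict Implicit. Unset Printing Implicit Defensive.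
Import GRing.Theory.
Local Open Scope ring_scope.

(* Membership in the subfield F_q of a finite field F (of order a power of q):
   the subfield of order q is exactly the set of fixed points of x |-> x^q. *)
Definition in_Fq (F : finFieldType) (q : nat) (x : F) : bool := x ^+ q == x.

Definition scattered (F : finFieldType) (q t : nat) (S : {poly F}) : Prop :=
  forall y z : F, y != 0 -> z != 0 ->
    S.[y] / y ^+ (q ^ t) = S.[z] / z ^+ (q ^ t) -> in_Fq q (y / z).

(* Main.v *)
Require Import Defs.
From HB Require Import structures.
From mathcomp Require Import all_boot all_order all_algebra all_field.
From mathcomp Require cyclic.
From mathcomp Require Import zify.
Import GRing.Theory.
Local Open Scope ring_scope.

Lemma hN (F : finFieldType) : forall x : F, x != 0 -> x ^+ (#|F|.-1) = 1.
Proof.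
move=> x nx; apply: (mulfI nx). rewrite -exprS.
rewrite prednK; last by rewrite ltnW // finNzRing_gt1.
by rewrite expf_card mulr1.
Qed.
Lemma A (F : finFieldType) : all (#|F|.-1).-unity_root [seq x : F <- enum F | x != 0%R].
Proof.
apply/allP => x; rewrite mem_filter => /andP[nx _].
by rewrite unity_rootE hN.
Qed.
Lemma B (F : finFieldType) : (#|F|.-1 <= size [seq x : F <- enum F | x != 0%R])%N.
Proof.
rewrite -(cardC1 (0:F)) cardE enumT /enum_mem; apply: eq_leq; congr size.

Qed.
Lemma exists_prim (F : finFieldType) :
  exists g : F, (#|F|.-1).-primitive_root g.
Proof.
have F1 := finNzRing_gt1 F.
have N0 : (0 < #|F|.-1)%N by rewrite -ltnS prednK // ltnW.
have /hasP[g _ pg] := @cyclic.has_prim_root F _ [seq x : F <- enum F | x != 0%R] N0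
  (A F) (filter_uniq _ (enum_uniq F)) (B F).
by exists g.
Qed.
Lemma H1 (b q : nat) : (1 <= q)%N -> (b + 1 + (b + 1) * (q - 1) = (b + 1) * q)%N.
Proof. by move=> q1; rewrite mulnBr muln1 addnC subnK // leq_pmulr. Qed.
Lemma H2 (b q : nat) : (q < b)%N -> (1 <= q)%N -> ((b + 1) * (q - 1) < (b * b).-1)%N.
Proof.
move=> qb q1.
have e : ((b + 1) * (b - 1) = (b * b).-1)%N.
  by rewrite mulnBr muln1 mulnDl mul1n subnDA addnK subn1.
rewrite -e ltn_pmul2l ?addn1 //.
by rewrite ltn_sub2r // (leq_ltn_trans q1).
Qed.
Theorem mainTheorem11 (q : nat) (F : finFieldType) :
  odd q -> (q %% 4 = 1)%N -> #|F| = (q ^ 8)%N ->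
  forall delta : F, delta != 0 -> delta != 1 -> delta != -1 -> delta ^+ 2 = -1 ->
  let S : {poly F} := 'X^q + delta *: 'X^(q ^ 5) in
  ~ scattered q 1 S /\ ~ scattered q 5 S.
Proof.
move=> oq _ cF delta _ _ _ _ S.
have F1 := finNzRing_gt1 F.
have q2 : (2 <= q)%N.
  move: F1; rewrite cF; case: q oq {S cF} => [|[|q]] //= _; by rewrite exp1n.
have [g pg] := exists_prim F.
rewrite cF in pg.
have qq : (1 <= q ^ 4)%N by rewrite expn_gt0 (leq_trans _ q2).
have e8 : (q ^ 8 = q ^ 4 * q ^ 4)%N by rewrite -expnD.
set w := g ^+ (q ^ 4 + 1).
have gn : g != 0.
  apply/eqP => g0; have := prim_expr_order pg; rewrite g0 expr0n.
  case: (q ^ 8).-1 (prim_order_gt0 pg) => // n _ /eqP.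
  by rewrite eq_sym oner_eq0.
have w0 : w != 0 by rewrite /w expf_neq0.
have w4 : w ^+ (q ^ 4) = w.
  rewrite /w -exprM.
  have -> : ((q ^ 4 + 1) * q ^ 4 = (q ^ 8).-1 + (q ^ 4 + 1))%N.
    rewrite e8; move: qq; set a := (q ^ 4)%N => qq. nia.
  by rewrite exprD prim_expr_order // mul1r.
have wq : ~~ in_Fq q (w / 1).
  rewrite divr1 /in_Fq /w -exprM; apply/negP => /eqP h.
  have h1 : g ^+ ((q ^ 4 + 1) * (q - 1)) = 1.
    apply: (@mulfI _ (g ^+ (q ^ 4 + 1))); first by rewrite expf_neq0.
    rewrite -exprD mulr1 -[in RHS]h; congr (_ ^+ _).
    exact: (@H1 _ _ (ltnW q2)).
  move: h1 => /eqP; rewrite -(prim_order_dvd pg) => /dvdn_leq.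
  have pos : (0 < (q ^ 4 + 1) * (q - 1))%N by rewrite muln_gt0 addn1 /= subn_gt0.
  move=> /(_ pos).
  have : (q < q ^ 4)%N by rewrite -{1}(expn1 q) ltn_exp2l.
  by move=> hq; rewrite e8 leqNgt (@H2 _ _ hq (ltnW q2)).
have w5 : w ^+ (q ^ 5) = w ^+ q by rewrite expnS mulnC exprM w4.
have key : forall t, (t = 1 \/ t = 5)%N -> ~ scattered q t S.
  move=> t ht sc; apply: (negP wq); apply: sc => //; first exact: oner_neq0.
  rewrite /S !hornerE w5 !expr1n mulr1 divr1 -{1}(mul1r (w ^+ q)) -mulrDl.
  by case: ht => ->; rewrite ?expn1 ?w5 mulfK ?expf_neq0.
split; apply: key; by [left | right].
Qed.
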